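(* Let $a\ge 1$ and $n=2^a$. If $\mathcal{S}$ is an $n\times n$ unitary-weight single-symbol decodable STBC transmitting $k$ independent complex symbols over $n$ channel uses, then its rate satisfies $$\frac{k}{2^a}\le\frac{2a}{2^a}=\frac{a}{2^{a-1}}.$$
   Context: A linear square STBC with $k$ complex symbols is given by $2k$ weight matrices $A_{iI},A_{iQ}\in\mathbb{C}^{n\times n}$ ($1\le i\le k$), linearly independent over $\mathbb{R}$, with codewords $S=\sum_{i=1}^k(x_{iI}A_{iI}+x_{iQ}A_{iQ})$, $x_i=x_{iI}+jx_{iQ}$ ranging over a complex constellation; its rate is $k/n$ complex symbols per channel use. It is a unitary-weight single-symbol decodable (SSD) code if: (i) $A_{iI}^HA_{iI}=A_{iQ}^HA_{iQ}=I_n$ for all $i$; (ii) for all $1\le i\ne j\le k$: $A_{iI}^HA_{jQ}+A_{jQ}^HA_{iI}=O_n$, $A_{iI}^HA_{jI}+A_{jI}^HA_{iI}=O_n$, $A_{iQ}^HA_{jQ}+A_{jQ}^HA_{iQ}=O_n$; and (iii) it is not the case that $A_{iI}^HA_{iQ}+A_{iQ}^HA_{iI}=O_n$ for all $i=1,\dots,k$. *)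

(* Defs.v *)
From HB Require Import structures.
From mathcomp Require Import all_boot all_order all_algebra.
From mathcomp Require Import complex.
From mathcomp Require Import reals.
Set Implicit Arguments. Unset Strict Implicit. Unset Printing Implicit Defensive.
Import Order.TTheory GRing.Theory Num.Theory.
Local Open Scope ring_scope.

Definition hconj (R : realType) (n : nat) (A : 'M[R[i]]_n) : 'M[R[i]]_n :=
  (map_mx Num.conj A)^T.

Definition lin_indep_R (R : realType) (n k : nat)
  (AI AQ : 'I_k -> 'M[R[i]]_n) : Prop :=
  forall cI cQ : 'I_k -> R,
    \sum_(i < k) ((cI i)%:C%C *: AI i + (cQ i)%:C%C *: AQ i) = 0 ->
    forall i, cI i = 0 /\ cQ i = 0.

Definition unitary_weight_SSD (R : realType) (n k : nat)
  (AI AQ : 'I_k -> 'M[R[i]]_n) : Prop :=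
  [/\ lin_indep_R AI AQ,
      (forall i, hconj (AI i) *m AI i = 1%:M /\ hconj (AQ i) *m AQ i = 1%:M),
      (forall i j, i != j ->
         [/\ hconj (AI i) *m AQ j + hconj (AQ j) *m AI i = 0,
             hconj (AI i) *m AI j + hconj (AI j) *m AI i = 0 &
             hconj (AQ i) *m AQ j + hconj (AQ j) *m AQ i = 0]) &
      ~ (forall i, hconj (AI i) *m AQ i + hconj (AQ i) *m AI i = 0)].

(* Main.v *)
Require Import Defs.
From HB Require Import structures.
From mathcomp Require Import all_boot all_order all_algebra.
From mathcomp Require Import complex.
From mathcomp Require Import reals.
From mathcomp Require Import ring.
Set Implicit Arguments. Unset Strict Implicit. Unset Printing Implicit Defensive.
Import Order.TTheory GRing.Theory Num.Theory.
Local Open Scope ring_scope.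

Section Hconj.
Variable R : realType.
Variable n : nat.
Local Notation M := 'M[R[i]]_n.

Lemma hconjK (A : M) : hconj (hconj A) = A.
Proof. by apply/matrixP => i j; rewrite !mxE conjCK. Qed.

Lemma hconjM (A B : M) : hconj (A *m B) = hconj B *m hconj A.
Proof.
apply/matrixP => i j; rewrite !mxE rmorph_sum; apply: eq_bigr => l _.
by rewrite !mxE rmorphM mulrC.
Qed.

Lemma hconjD (A B : M) : hconj (A + B) = hconj A + hconj B.
Proof. by apply/matrixP => i j; rewrite !mxE rmorphD. Qed.

Lemma hconjN (A : M) : hconj (- A) = - hconj A.
Proof. by apply/matrixP => i j; rewrite !mxE rmorphN. Qed.

Lemma hconjZ c (A : M) : hconj (c *: A) = c^* *: hconj A.
Proof. by apply/matrixP => i j; rewrite !mxE rmorphM. Qed.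

Lemma hconj1 : hconj (1%:M : M) = 1%:M.
Proof. by apply/matrixP => i j; rewrite !mxE conjC_nat eq_sym. Qed.

Lemma hconj0 : hconj (0 : M) = 0.
Proof. by apply/matrixP => i j; rewrite !mxE conjC0. Qed.

Lemma tr_hconj (A : M) : \tr (hconj A) = (\tr A)^*.
Proof. rewrite /hconj mxtrace_tr /mxtrace rmorph_sum; by under eq_bigr do rewrite mxE. Qed.

Lemma tr_hconj_eq0 (A : M) : \tr (hconj A *m A) = 0 -> A = 0.
Proof.
move=> H; apply/matrixP => i j; rewrite mxE.
have : \sum_(j0 < n) \sum_(i0 < n) (A i0 j0)^* * A i0 j0 = 0.
  rewrite -[RHS]H /mxtrace; apply: eq_bigr => l _; rewrite mxE; apply: eq_bigr => p _.
  by rewrite !mxE.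
move/eqP; rewrite psumr_eq0; last first.
  move=> l _; apply: sumr_ge0 => p _; by rewrite mulrC mul_conjC_ge0.
move/allP/(_ j (mem_index_enum _)) => /= /eqP/eqP.
rewrite psumr_eq0; last by move=> p _; rewrite mulrC mul_conjC_ge0.
move/allP/(_ i (mem_index_enum _)) => /=.
by rewrite mulrC mul_conjC_eq0 => /eqP.
Qed.

Lemma one_neq0 : (0 < n)%N -> (1%:M : M) != 0.
Proof.
move=> n0; apply/eqP => /matrixP /(_ (Ordinal n0) (Ordinal n0)).
by rewrite !mxE eqxx => /eqP; rewrite oner_eq0.
Qed.

Lemma unit_r (A : M) : hconj A *m A = 1%:M -> A *m hconj A = 1%:M.
Proof. exact: mulmx1C. Qed.

Lemma x_eq_oppx (x : R[i]) : x = - x -> x = 0.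
Proof.
move=> H; have : x *+ 2 == 0 by rewrite mulr2n {1}H addNr.
by rewrite mulrn_eq0 /= => /eqP.
Qed.

Lemma tr_anti (G W : M) : hconj G *m G = 1%:M ->
  G *m W = - (W *m G) -> \tr W = 0.
Proof.
move=> HG HW; apply: x_eq_oppx.
have HG' := unit_r HG.
have E1 : \tr W = \tr (hconj G *m (W *m G)).
  by rewrite mxtrace_mulC -mulmxA HG' mulmx1.
have E2 : W *m G = - (G *m W) by rewrite HW opprK.
rewrite {1}E1 E2 mulmxN mulmxA HG mul1mx.
by rewrite raddfN.
Qed.

Lemma orth_card (T : finType) (f : T -> M) :
  (forall x y, x != y -> \tr (hconj (f x) *m f y) = 0) ->
  (forall x, f x != 0) -> (#|T| <= n * n)%N.
Proof.
move=> Horth Hnz.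
pose X := in_tuple (map f (enum T)).
have fX : free X.
  apply/freeP => k Hk i.
  have Hi : (i < #|T|)%N by rewrite cardE -(size_map f) ltn_ord.
  have := congr1 (fun Z => \tr (hconj X`_i *m Z)) Hk.
  rewrite mulmx0 raddf0 mulmx_sumr raddf_sum /=.
  rewrite (bigD1 i) //= big1; last first.
    move=> p /negbTE pi.
    rewrite -scalemxAr mxtraceZ.
    have Hp : (p < size (enum T))%N by rewrite -(size_map f) ltn_ord.
    have Hi' : (i < size (enum T))%N by rewrite -(size_map f) ltn_ord.
    rewrite /X /= (nth_map (enum_default (Ordinal Hi))) //.
    rewrite (nth_map (enum_default (Ordinal Hi))) // Horth ?mulr0 //.
    rewrite nth_uniq ?enum_uniq //; have pi2 : (val p != val i) by apply: negbT. by rewrite eq_sym.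
  rewrite addr0 -scalemxAr mxtraceZ => /eqP; rewrite mulf_eq0 => /orP [/eqP //|].
  move/eqP/tr_hconj_eq0/eqP; rewrite /X /=.
  have Hi' : (i < size (enum T))%N by rewrite -(size_map f) ltn_ord.
  by rewrite (nth_map (enum_default (Ordinal Hi))) // (negbTE (Hnz _)).
have := dimvS (subvf (span X)).
move/eqP: fX => ->; rewrite dimvf /= size_map -cardE.
by [].
Qed.

End Hconj.
Section Cliff.
Variable R : realType.
Variable n m : nat.
Local Notation M := 'M[R[i]]_n.
Variable g : 'I_m -> M.
Hypothesis gskew : forall l, hconj (g l) = - g l.
Hypothesis gunit : forall l, hconj (g l) *m g l = 1%:M.
Hypothesis ganti : forall l l', l != l' -> g l *m g l' = - (g l' *m g l).

Definition monos (s : seq 'I_m) : M := foldr (fun l A => g l *m A) 1%:M s.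
Definition mono (U : {set 'I_m}) : M := monos (enum U).
Definition sg (U : {set 'I_m}) (l : 'I_m) : R[i] := (-1) ^+ (odd #|U| (+) (l \in U)).

Lemma comm_seq l s :
  g l *m monos s = (-1) ^+ (count (fun j => j != l) s) *: (monos s *m g l).
Proof.
elim: s => [|j s IH] /=; first by rewrite expr0 scale1r mulmx1 mul1mx.
rewrite mulmxA; case: (eqVneq j l) => [->|jl] /=.
  by rewrite add0n -mulmxA [in LHS]IH -scalemxAr mulmxA.
rewrite (ganti (l:=l) (l':=j)); last by rewrite eq_sym. rewrite mulNmx -[in LHS]mulmxA IH -scalemxAr mulmxA.
by rewrite exprS mulN1r scaleNr.
Qed.

Lemma comm_set l U : g l *m mono U = sg U l *: (mono U *m g l).
Proof.
rewrite /mono comm_seq /sg -signr_odd; congr ((-1) ^+ _ *: _).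
have := count_predC (pred1 l) (enum U).
rewrite count_uniq_mem ?enum_uniq // mem_enum -cardE.
move=> <-; rewrite oddD oddb addbC addbA addbb /=.
by [].
Qed.

Lemma sg_real U l : (sg U l)^* = sg U l.
Proof. by rewrite /sg rmorph_sign. Qed.

Lemma sg_sq U l : sg U l * sg U l = 1.
Proof. by rewrite /sg -signr_addb addbb. Qed.

Lemma comm_set_h l U : g l *m hconj (mono U) = sg U l *: (hconj (mono U) *m g l).
Proof.
have := congr1 (@hconj R n) (comm_set l U).
rewrite hconjM hconjZ hconjM sg_real gskew mulmxN mulNmx scalerN => /oppr_inj H.
by rewrite H scalerA sg_sq scale1r.
Qed.

Lemma unit_seq s : hconj (monos s) *m monos s = 1%:M.
Proof.
elim: s => [|j s IH] /=; first by rewrite hconj1 mulmx1.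
by rewrite hconjM -mulmxA (mulmxA (hconj (g j))) gunit mul1mx IH.
Qed.

Lemma unit_set U : hconj (mono U) *m mono U = 1%:M.
Proof. exact: unit_seq. Qed.

Lemma sg_diff (U V : {set 'I_m}) (l : 'I_m) : (odd #|U| (+) (l \in U)) != (odd #|V| (+) (l \in V)) ->
  sg V l * sg U l = -1.
Proof.
move=> H; rewrite /sg -signr_addb.
by case: (odd #|U| (+) (l \in U)) (odd #|V| (+) (l \in V)) H => [] [].
Qed.

Lemma exists_diff (U V : {set 'I_m}) : ~~ odd m -> U != V ->
  exists l, (odd #|U| (+) (l \in U)) != (odd #|V| (+) (l \in V)).
Proof.
move=> Hm UV.
case/boolP: [exists l, (odd #|U| (+) (l \in U)) != (odd #|V| (+) (l \in V))].
  by move/existsP.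
rewrite negb_exists => /forallP H; exfalso.
case: (eqVneq (odd #|U|) (odd #|V|)) => HUV.
  move/eqP: UV; apply; apply/setP => l.
  by move: (H l); rewrite HUV negbK => /eqP /addbI.
have HC : U = ~: V.
  apply/setP => l; rewrite in_setC.
  move: (H l); rewrite negbK => /eqP.
  move: HUV; case: (odd #|U|); case: (odd #|V|) => //= _;
  by case: (l \in U); case: (l \in V).
move: Hm; rewrite -(card_ord m) -(cardsC V) -HC oddD.
by move: HUV; case: (odd #|U|); case: (odd #|V|).
Qed.

Lemma mono_orth (U V : {set 'I_m}) : ~~ odd m -> U != V ->
  \tr (hconj (mono V) *m mono U) = 0.
Proof.
move=> Hm UV; have [l Hl] := exists_diff Hm UV.
apply: (tr_anti (gunit l)).
rewrite mulmxA comm_set_h -scalemxAl -mulmxA comm_set scalemxAr scalerA.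
by rewrite sg_diff // scaleN1r mulmxN mulmxA.
Qed.

Lemma mono_neq0 U : (0 < n)%N -> mono U != 0.
Proof.
move=> n0; apply/eqP => H; move: (unit_set U); rewrite H mulmx0 => /esym/eqP.
by rewrite (negbTE (one_neq0 R n0)).
Qed.

Lemma exists_same (j : 'I_m) (U : {set 'I_m}) : ~~ odd m -> U != [set j] -> U != setT ->
  exists l, (l != j) && ~~ (odd #|U| (+) (l \in U)).
Proof.
move=> Hm U1 UT.
case/boolP: [exists l, (l != j) && ~~ (odd #|U| (+) (l \in U))].
  by move/existsP.
rewrite negb_exists => /forallP H; exfalso.
case/boolP: (odd #|U|) => HU.
  have : U \subset [set j].
    apply/subsetP => l lU; rewrite in_set1; apply/negPn/negP => lj.
    by move: (H l); rewrite lj HU lU.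
  rewrite subset1 (negbTE U1) /= => /eqP U0.
  by move: HU; rewrite U0 cards0.
case/boolP: (j \in U) => jU.
  move/eqP: UT; apply; apply/setP => l; rewrite in_setT.
  case: (eqVneq l j) => [->//|lj].
  by move: (H l); rewrite lj (negbTE HU) /= negbK.
have HC : U = [set~ j].
  apply/setP => l; rewrite in_setC1.
  case: (eqVneq l j) => [->|lj]; first by rewrite (negbTE jU) ?eqxx.
  by move: (H l); rewrite lj (negbTE HU) /= negbK.
have m0 : (0 < m)%N by apply: leq_ltn_trans (ltn_ord j).
move: HU Hm; rewrite HC cardsC1 card_ord -{2}(prednK m0) /=; by case: (odd m.-1).
Qed.

Lemma coef_zero (j : 'I_m) (X : M) (U : {set 'I_m}) : ~~ odd m ->
  (forall l, l != j -> g l *m X = - (X *m g l)) ->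
  U != [set j] -> U != setT -> \tr (hconj (mono U) *m X) = 0.
Proof.
move=> Hm HX U1 UT; have [l /andP [lj Hl]] := exists_same Hm U1 UT.
apply: (tr_anti (gunit l)).
rewrite mulmxA comm_set_h -scalemxAl -mulmxA HX // mulmxN scalerN mulmxA.
by move: Hl; rewrite /sg; case: (odd #|U| (+) (l \in U)) => //= _; rewrite scale1r.
Qed.

Lemma mono1 j : mono [set j] = g j.
Proof. by rewrite /mono enum_set1 /= mulmx1. Qed.

Definition Gam := mono setT.

Lemma Gam_anti l : ~~ odd m -> g l *m Gam = - (Gam *m g l).
Proof.
move=> Hm; rewrite /Gam comm_set /sg cardsT card_ord in_setT (negbTE Hm) /=.
by rewrite expr1 scaleN1r.
Qed.

Hypothesis Hdim : (2 ^ m)%N = (n * n)%N.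

Lemma complete X : ~~ odd m ->
  X = \sum_(U : {set 'I_m}) (\tr (hconj (mono U) *m X) / n%:R) *: mono U.
Proof.
move=> Hm.
have n0 : (0 < n)%N by move: (expn_gt0 2 m); rewrite Hdim muln_gt0 => /andP [].
have nz : (n%:R : R[i]) != 0 by rewrite pnatr_eq0 -lt0n.
apply/eqP; rewrite -subr_eq0; apply/eqP.
set Y := (_ - _).
have YU : forall U, \tr (hconj (mono U) *m Y) = 0.
  move=> U; rewrite /Y mulmxBr raddfB mulmx_sumr (raddf_sum (@mxtrace _ n)).
  rewrite (bigD1 U) // big1 /=; last first.
    by move=> V VU; rewrite -scalemxAr mxtraceZ mono_orth ?mulr0.
  rewrite addr0 -scalemxAr mxtraceZ unit_set mxtrace1.
  by rewrite divfK // subrr.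
case: (eqVneq Y 0) => // Ynz; exfalso.
pose f (o : option {set 'I_m}) := if o is Some U then mono U else Y.
have := @orth_card R n _ f.
rewrite card_option -cardsT -powersetT card_powerset cardsT card_ord Hdim ltnn.
move=> H; suff : false by []; apply: H.
  move=> [x|] [y|] //= xy.
  - by apply: mono_orth => //; rewrite eq_sym; apply: contraNneq xy => ->.
  - have := congr1 (fun z => z^*) (YU y); rewrite /= conjC0 -tr_hconj hconjM hconjK.
    exact.
by move=> [x|] /=; [apply: mono_neq0|].
Qed.

Lemma decomp j X : ~~ odd m -> (1 < m)%N ->
  (forall l, l != j -> g l *m X = - (X *m g l)) ->
  exists a b, X = a *: g j + b *: Gam.
Proof.
move=> Hm m1 HX.
have jT : [set j] != setT.
  apply/negP => /eqP E; have : #|[set j]| = #|[set: 'I_m]| by rewrite E.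
  rewrite cards1 cardsT card_ord => E1; by move: m1; rewrite -E1.
rewrite (complete X Hm) (bigD1 [set j]) // (bigD1 setT) /=; last by rewrite eq_sym.
rewrite big1 ?addr0; last first.
  move=> U /andP [U1 UT]; by rewrite (coef_zero Hm HX U1 UT) mul0r scale0r.
rewrite mono1; by do 2 eexists.
Qed.

Definition ac (x y : M) := x *m y + y *m x.

Lemma acDl x y z : ac (x + y) z = ac x z + ac y z.
Proof. by rewrite /ac mulmxDl mulmxDr addrACA. Qed.
Lemma acDr x y z : ac x (y + z) = ac x y + ac x z.
Proof. by rewrite /ac mulmxDl mulmxDr addrACA. Qed.
Lemma acZl c x y : ac (c *: x) y = c *: ac x y.
Proof. by rewrite /ac -scalemxAl -scalemxAr scalerDr. Qed.
Lemma acZr c x y : ac x (c *: y) = c *: ac x y.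
Proof. by rewrite /ac -scalemxAl -scalemxAr scalerDr. Qed.
Lemma ac0 x y : x *m y = - (y *m x) -> ac x y = 0.
Proof. by move=> H; rewrite /ac H addNr. Qed.

Lemma core (j0 j1 : 'I_m) (e0 e1 : M) : ~~ odd m -> (1 < m)%N -> j0 != j1 ->
  (forall l, l != j0 -> g l *m e0 = - (e0 *m g l)) ->
  (forall l, l != j1 -> g l *m e1 = - (e1 *m g l)) ->
  e0 *m e1 = - (e1 *m e0) ->
  (exists c, e0 = c *: g j0) \/ (exists c, e1 = c *: g j1).
Proof.
move=> Hm m1 j01 H0 H1 H01.
have [a0 [b0 E0]] := decomp Hm m1 H0.
have [a1 [b1 E1]] := decomp Hm m1 H1.
have n0 : (0 < n)%N by move: (expn_gt0 2 m); rewrite Hdim muln_gt0 => /andP [].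
have : ac e0 e1 = 0 by apply: ac0.
rewrite E0 E1 !acDl !acDr !acZl !acZr.
rewrite (ac0 (ganti j01)) (ac0 (Gam_anti _ Hm)).
have -> : ac Gam (g j1) = 0.
  by apply: ac0; rewrite Gam_anti // opprK.
rewrite !scaler0 !add0r scalerA.
move/eqP; rewrite scaler_eq0 => /orP [].
  rewrite mulf_eq0 => /orP [] /eqP Hb.
    by left; exists a0; rewrite Hb scale0r addr0.
  by right; exists a1; rewrite Hb scale0r addr0.
move=> /eqP HG; exfalso.
have U := unit_set setT; rewrite -/Gam in U.
have : hconj Gam *m (hconj Gam *m ac Gam Gam) = (2 : R[i]) *: 1%:M.
  by rewrite /ac !mulmxDr (mulmxA (hconj Gam) Gam Gam) U mul1mx U scaler_nat.
rewrite HG !mulmx0 => /esym/eqP; rewrite scaler_eq0 (negbTE (one_neq0 R n0)) orbF.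
by rewrite pnatr_eq0.
Qed.

End Cliff.

Section Main.
Variable R : realType.
Variable n : nat.
Local Notation M := 'M[R[i]]_n.

Lemma normal_hm (U0 A B : M) : U0 *m hconj U0 = 1%:M ->
  hconj (hconj U0 *m A) *m (hconj U0 *m B) = hconj A *m B.
Proof.
move=> HU; rewrite hconjM hconjK -mulmxA (mulmxA U0) HU mul1mx //.
Qed.

Lemma skew_anti (x y : M) : hconj x = - x -> hconj y = - y ->
  hconj x *m y + hconj y *m x = 0 -> x *m y = - (y *m x).
Proof.
move=> Hx Hy; rewrite Hx Hy !mulNmx => /eqP; rewrite addr_eq0 opprK => /eqP H.
by rewrite -H opprK.
Qed.

Lemma skew_of (U0 A : M) : hconj U0 *m A + hconj A *m U0 = 0 ->
  hconj (hconj U0 *m A) = - (hconj U0 *m A).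
Proof.
rewrite hconjM hconjK addrC => /eqP; rewrite addr_eq0 => /eqP //.
Qed.

Lemma real_of (c : R[i]) (g : M) : hconj g = - g -> g != 0 ->
  hconj (c *: g) = - (c *: g) -> exists x : R, c = (x%:C)%C.
Proof.
move=> Hg g0; rewrite hconjZ Hg scalerN => /oppr_inj /eqP.
rewrite -subr_eq0 -scalerBl scaler_eq0 (negbTE g0) orbF subr_eq0.
case: c => x y /= /eqP [] Hy; exists x.
have : y *+ 2 == 0 by rewrite mulr2n -{1}Hy addNr.
by rewrite mulrn_eq0 /= => /eqP ->.
Qed.

End Main.

Theorem theorem1 (R : realType) (a k : nat) (AI AQ : 'I_k -> 'M[R[i]]_(2 ^ a)) :
  (1 <= a)%N ->
  unitary_weight_SSD AI AQ ->
  (k%:R / (2 ^ a)%:R <= (2 * a)%:R / (2 ^ a)%:R :> R) /\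
  ((2 * a)%:R / (2 ^ a)%:R = a%:R / (2 ^ a.-1)%:R :> R).
Proof.
move=> a1 [Hind Hunit Hcross _].
have n0 : (0 < 2 ^ a)%N by rewrite expn_gt0.
have nz : ((2 ^ a)%:R : R) != 0 by rewrite pnatr_eq0 -lt0n.
split; last first.
  have E : (2 ^ a = 2 * 2 ^ a.-1)%N by rewrite -expnS prednK.
  rewrite E !natrM; field.
  by rewrite pnatr_eq0 -lt0n expn_gt0.
suff Hk : (k <= 2 * a)%N.
  by apply: ler_wpM2r; [rewrite invr_ge0 ler0n | rewrite ler_nat].
rewrite leqNgt; apply/negP => Hk.
set m := (2 * a)%N.
have mk : (m <= k)%N by apply: ltnW.
pose i0 : 'I_k := Ordinal Hk.
pose f (l : 'I_m) : 'I_k := widen_ord mk l.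
pose U0 := AI i0.
have HU0 : U0 *m hconj U0 = 1%:M by apply: mulmx1C; case: (Hunit i0).
have fi0 l : f l != i0.
  by rewrite -val_eqE /= neq_ltn ltn_ord.
have finj l l' : l != l' -> f l != f l'.
  by move=> ll; rewrite -val_eqE /=.
pose g l := hconj U0 *m AI (f l).
pose e l := hconj U0 *m AQ (f l).
have Hc0 l : [/\ hconj U0 *m AQ (f l) + hconj (AQ (f l)) *m U0 = 0,
      hconj U0 *m AI (f l) + hconj (AI (f l)) *m U0 = 0
    & hconj (AQ i0) *m AQ (f l) + hconj (AQ (f l)) *m AQ i0 = 0].
  by apply: Hcross; rewrite eq_sym fi0.
have gskew l : hconj (g l) = - g l.
  by apply: skew_of; case: (Hc0 l).
have eskew l : hconj (e l) = - e l.
  by apply: skew_of; case: (Hc0 l).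
have gunit l : hconj (g l) *m g l = 1%:M.
  rewrite normal_hm //; by case: (Hunit (f l)).
have ganti l l' : l != l' -> g l *m g l' = - (g l' *m g l).
  move=> ll; apply: skew_anti => //.
  rewrite !normal_hm //; by case: (Hcross (f l) (f l') (finj _ _ ll)).
have eanti l l' : l' != l -> g l' *m e l = - (e l *m g l').
  move=> ll; apply: skew_anti => //.
  rewrite !normal_hm //; by case: (Hcross (f l') (f l) (finj _ _ ll)).
have eeanti l l' : l != l' -> e l *m e l' = - (e l' *m e l).
  move=> ll; apply: skew_anti => //.
  rewrite !normal_hm //; by case: (Hcross (f l) (f l') (finj _ _ ll)).
have m1 : (1 < m)%N by rewrite /m (leq_mul2l 2 1 a) a1.
have m0 : (0 < m)%N by apply: ltnW.
pose j0 : 'I_m := Ordinal m0.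
pose j1 : 'I_m := Ordinal m1.
have j01 : j0 != j1 by rewrite -val_eqE.
have Hm : ~~ odd m by rewrite /m oddM.
have Hdim : (2 ^ m = 2 ^ a * 2 ^ a)%N by rewrite /m mul2n -addnn expnD.
have Hfin l c : e l = c *: g l -> False.
  move=> El.
  have g0 : g l != 0.
    apply/eqP => H0; move: (gunit l); rewrite H0 mulmx0 => /esym/eqP.
    by rewrite (negbTE (one_neq0 R n0)).
  have [x Ex] : exists x : R, c = (x%:C)%C.
    by apply: (real_of (gskew l) g0); rewrite -El eskew.
  have EA : AQ (f l) = c *: AI (f l).
    have := congr1 (mulmx U0) El.
    by rewrite -scalemxAr !mulmxA HU0 !mul1mx.
  pose cI i : R := if i == f l then - x else 0.
  pose cQ i : R := if i == f l then 1 else 0.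
  have := Hind cI cQ.
  have Hs : \sum_(i < k) ((cI i)%:C%C *: AI i + (cQ i)%:C%C *: AQ i) = 0.
    rewrite (bigD1 (f l)) //= big1; last first.
      move=> i /negbTE ifl; rewrite /cI /cQ ifl.
      by rewrite !scale0r addr0.
    rewrite /cI /cQ eqxx addr0 EA Ex rmorphN /= scaleNr.
    by rewrite (_ : (1%:C)%C = 1) // scale1r addNr.
  move=> /(_ Hs (f l)) [_]; rewrite /cQ eqxx => /eqP.
  by rewrite oner_eq0.
have := core gskew gunit ganti Hdim Hm m1 j01 (eanti j0) (eanti j1) (eeanti _ _ j01).
by case=> [[c /Hfin]|[c /Hfin]].
Qed.
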